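(* Let $\mathcal{M}_1=\{A\in\mathbb{C}^{3\times3}\mid \deg(m_A)\le 2\}$. Then for all $A\in\mathcal{M}_1$: $c_3(A)=0$, $c_4(A)=0$, $d_2(A)^3=d_3(A)^2$, and $d_3(A)\,c_1(A)=d_2(A)\,c_2(A)$.
   Context: $m_A$ is the minimal polynomial of $A$. For $A\in\mathbb{C}^{3\times3}$: $c_1(A)=A-\frac13\mathrm{tr}(A)I_3$; $c_2(A)=c_1(c_1(A)^2)$; $d_2(A)=\frac16\mathrm{tr}(c_1(A)^2)$; $d_3(A)=\frac12\det(c_1(A))$; $c_3(A)$ is the cubic form $\underline{x}\mapsto\det(\underline{x}\,|\,A\underline{x}\,|\,A^2\underline{x})$ on $\mathbb{C}^3$ (matrix with these columns); $c_4(A)$ is the cubic form on row vectors $\underline{x}^T\mapsto\det$ of the matrix with rows $\underline{x}^T,\underline{x}^TA,\underline{x}^TA^2$. *)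

(* Defs.v *)
From HB Require Import structures.
From mathcomp Require Import all_boot all_order all_algebra.
From mathcomp Require Import complex.
From mathcomp Require Import reals.
Set Implicit Arguments. Unset Strict Implicit. Unset Printing Implicit Defensive.
Import Order.TTheory GRing.Theory Num.Theory.
Local Open Scope ring_scope.

Section Defs.
Variable F : fieldType.

Definition c1 (A : 'M[F]_3) : 'M[F]_3 := A - (3%:R^-1 * \tr A)%:M.
Definition c2 (A : 'M[F]_3) : 'M[F]_3 := c1 (c1 A ^+ 2).
Definition d2 (A : 'M[F]_3) : F := 6%:R^-1 * \tr (c1 A ^+ 2).
Definition d3 (A : 'M[F]_3) : F := 2%:R^-1 * \det (c1 A).
Definition c3 (A : 'M[F]_3) (x : 'cV[F]_3) : F :=
  \det (\matrix_(i < 3, j < 3) ((A ^+ j) *m x) i 0).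
Definition c4 (A : 'M[F]_3) (x : 'rV[F]_3) : F :=
  \det (\matrix_(i < 3, j < 3) (x *m (A ^+ i)) 0 j).
End Defs.

(* Main.v *)
Require Import Defs.
From HB Require Import structures.
From mathcomp Require Import all_boot all_order all_algebra.
From mathcomp Require Import complex.
From mathcomp Require Import reals.
Import Order.TTheory GRing.Theory Num.Theory.
Local Open Scope ring_scope.

From mathcomp Require Import ring.

Lemma det3 (R : comNzRingType) (A : 'M[R]_3) : \det A =
  A 0 0 * (A 1 1 * A 2 2 - A 1 2 * A 2 1)
- A 0 1 * (A 1 0 * A 2 2 - A 1 2 * A 2 0)
+ A 0 2 * (A 1 0 * A 2 1 - A 1 1 * A 2 0).
Proof.
rewrite (expand_det_row _ 0) !big_ord_recl big_ord0 /=.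
rewrite /cofactor !(expand_det_row _ 0) !big_ord_recl !big_ord0 /=.
rewrite /cofactor !det_mx11 !mxE /=.
pose f (i j : nat) := A (inord i) (inord j).
have E : forall i j : 'I_3, A i j = f i j by move=> i j; rewrite /f !inord_val.
rewrite !E /=.
rewrite /bump /=. ring.
Qed.
Lemma CH3 (R : comNzRingType) (A : 'M[R]_3) :
  2%:R *: A ^+ 3 = (2%:R * \tr A) *: A ^+ 2 - (\tr A ^+ 2 - \tr (A ^+ 2)) *: A + (2%:R * \det A)%:M.
Proof.
rewrite det3 /mxtrace.
rewrite !exprS expr0 !mulr1 -!mulmxE.
apply/matrixP => i j; rewrite !mxE !big_ord_recl !big_ord0 !mxE /=.
rewrite !big_ord_recl !big_ord0 /=.
pose f (i j : nat) := A (inord i) (inord j).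
have E : forall i j : 'I_3, A i j = f i j by move=> i' j'; rewrite /f !inord_val.
rewrite !E /bump /=.
case: i => [[|[|[|i]]] Hi] //; case: j => [[|[|[|j]]] Hj] //= ; ring.
Qed.

Lemma minrel (F : fieldType) (A : 'M[F]_3) : (size (mxminpoly A) <= 3)%N ->
  exists p0 p1 p2 : F, p2 *: A ^+ 2 + p1 *: A + p0%:M = 0 /\
    (p2 = 1 \/ (p2 = 0 /\ p1 = 1)).
Proof.
move=> Hs; set p := mxminpoly A; rewrite -/p in Hs.
have Hp : p = \poly_(i < 3) p`_i.
  apply/polyP => k; rewrite coef_poly; case: ltnP => // hk.
  by rewrite nth_default // (leq_trans Hs hk).
have H0 := mx_root_minpoly A; rewrite -/p Hp poly_def in H0.
rewrite rmorph_sum !big_ord_recr big_ord0 /= add0r !linearZ /= in H0.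
rewrite !rmorphXn /= horner_mx_X expr0 expr1 in H0.
exists p`_0, p`_1, p`_2; split.
  by rewrite -scalemx1 -H0 -addrA addrC [p`_1 *: A + _]addrC.
have Hm := mxminpoly_monic A; rewrite -/p in Hm.
have Hsz : (1 < size p)%N by rewrite /p size_mxminpoly ltnS mxminpoly_nonconstant.
move/monicP: Hm; rewrite lead_coefE.
have : size p = 2%N \/ size p = 3%N by move: Hs Hsz; case: (size p) => [|[|[|[|]]]]; auto.
case=> Hsp h1; rewrite Hsp in h1; [right; split => //; by rewrite nth_default // Hsp | by left].

Qed.

Lemma dpart (F : numFieldType) (B : 'M[F]_3) (s r : F) :
  \tr B = 0 -> B ^+ 2 = s *: B + r%:M ->
  \det B = s * r /\ r * (2%:R * s ^+ 2 - r) = 0.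
Proof.
move=> htr hB2.
have htr2 : \tr (B ^+ 2) = r *+ 3 by rewrite hB2 mxtraceD mxtraceZ htr mulr0 add0r mxtrace_scalar.
have CH := CH3 _ B.
rewrite htr mulr0 scale0r expr0n htr2 /= in CH.
have hB3 : B ^+ 3 = s *: (s *: B + r%:M) + r *: B.
  by rewrite exprSr hB2 mulrDl -scalerAl -expr2 hB2 -mulmxE mul_scalar_mx.
rewrite hB3 in CH.
have h6 : (6%:R : F) != 0 by rewrite pnatr_eq0.
have E : (2%:R * s ^+ 2 - r) *: B + (2%:R * (s * r) - 2%:R * \det B)%:M = 0.
  apply/matrixP => i j; move/matrixP: CH => /(_ i j); rewrite !mxE => CHij.
  move/eqP: CHij; rewrite -subr_eq0 => /eqP CHij.
  apply: (etrans _ CHij); ring.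
have hsB : forall y : F, y%:M * B = y *: B by move=> y; rewrite -mulmxE mul_scalar_mx.
have h1 := congr1 mxtrace E.
rewrite !linearE /= !mxtrace_scalar htr mulr0 add0r in h1.
have h2 := congr1 (fun M => \tr (M * B)) E => /=.
rewrite mulrDl -scalerAl hsB -expr2 mul0r !linearE /= htr htr2 mulr0 addr0 in h2.
split.
  have : 6%:R * (s * r - \det B) = 0 by rewrite -h1; ring.
  move/eqP; rewrite mulf_eq0 (negbTE h6) /= subr_eq0 => /eqP ->; done.
have h3 : (3%:R : F) != 0 by rewrite pnatr_eq0.
have : 3%:R * (r * (2%:R * s ^+ 2 - r)) = 0 by rewrite -h2; ring.
by move/eqP; rewrite mulf_eq0 (negbTE h3) /= => /eqP.
Qed.

Lemma c4part (F : fieldType) (A : 'M[F]_3) (p0 p1 p2 : F) :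
  p2 *: A ^+ 2 + p1 *: A + p0%:M = 0 -> (p2 = 1 \/ (p2 = 0 /\ p1 = 1)) ->
  forall x : 'rV[F]_3, c4 A x = 0.
Proof.
move=> rel hc x; rewrite /c4; apply/eqP/det0P.
exists (\row_(j < 3) nth 0 [:: p0; p1; p2] j).
  apply/eqP => /rowP hv; have := hv 2; have := hv 1; rewrite !mxE /= => e1 e2.
  by case: hc => [h|[h1 h2]]; move: (@oner_neq0 F); [rewrite -h e2 | rewrite -h2 e1]; rewrite eqxx.
apply/rowP => j.
have rel' : p2 *: A ^+ 2 + p1 *: A ^+ 1 + p0 *: A ^+ 0 = 0 by rewrite expr0 expr1 scalemx1.
have hx := congr1 (fun M => (x *m M) 0 j) rel'.
rewrite /= mulmx0 !mulmxDr -!scalemxAr !mxE in hx.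
rewrite !mxE !big_ord_recl big_ord0 !mxE /bump /=.
apply: (etrans _ hx); ring.
Qed.

Lemma c3part (F : fieldType) (A : 'M[F]_3) (p0 p1 p2 : F) :
  p2 *: A ^+ 2 + p1 *: A + p0%:M = 0 -> (p2 = 1 \/ (p2 = 0 /\ p1 = 1)) ->
  forall x : 'cV[F]_3, c3 A x = 0.
Proof.
move=> rel hc x; rewrite /c3 -det_tr; apply/eqP/det0P.
exists (\row_(j < 3) nth 0 [:: p0; p1; p2] j).
  apply/eqP => /rowP hv; have := hv 2; have := hv 1; rewrite !mxE /= => e1 e2.
  by case: hc => [h|[h1 h2]]; move: (@oner_neq0 F); [rewrite -h e2 | rewrite -h2 e1]; rewrite eqxx.
apply/rowP => j.
have rel' : p2 *: A ^+ 2 + p1 *: A ^+ 1 + p0 *: A ^+ 0 = 0 by rewrite expr0 expr1 scalemx1.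
have hx := congr1 (fun M => (M *m x) j 0) rel'.
rewrite /= mul0mx !mulmxDl -!scalemxAl !mxE in hx.
rewrite !mxE !big_ord_recl big_ord0 !mxE /bump /=.
apply: (etrans _ hx); ring.
Qed.

Lemma B2rel (F : numFieldType) (A : 'M[F]_3) (p0 p1 p2 : F) :
  p2 *: A ^+ 2 + p1 *: A + p0%:M = 0 -> (p2 = 1 \/ (p2 = 0 /\ p1 = 1)) ->
  exists s r : F, c1 A ^+ 2 = s *: c1 A + r%:M.
Proof.
move=> rel hc; rewrite /c1; set t := 3%:R^-1 * \tr A.
have hSS : forall a b : F, a%:M * b%:M = (a * b)%:M :> 'M[F]_3.
  by move=> a b; rewrite -mulmxE -scalar_mxM.
case: hc => [h | [h1 h2]].
  have hA2 : A * A = - (p1 *: A) - p0%:M.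
    rewrite -expr2 -[A ^+ 2]subr0 -rel h scale1r.
    apply/matrixP => i j; rewrite !mxE; ring.
  have hAT : A * t%:M = t *: A by rewrite -mulmxE mul_mx_scalar.
  have hTA : t%:M * A = t *: A by rewrite -mulmxE mul_scalar_mx.
  exists (- p1 - 2%:R * t), ((- p1 - 2%:R * t) * t + t ^+ 2 - p0).
  rewrite expr2 mulrBl !mulrBr hA2 hAT hTA hSS.
  apply/matrixP => i j; rewrite !mxE; ring.
have hA : A = - p0%:M.
  by apply/eqP; rewrite -addr_eq0 -rel h1 h2 scale0r add0r scale1r.
exists (- p0 - t), 0.
rewrite hA expr2 !(mulrBl, mulrBr, mulNr, mulrN, opprK, hSS).
apply/matrixP => i j; rewrite !mxE; ring.
Qed.

Lemma fin1 (F : numFieldType) (s r : F) : r * (2%:R * s ^+ 2 - r) = 0 ->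
  (6%:R^-1 * (r *+ 3)) ^+ 3 = (2%:R^-1 * (s * r)) ^+ 2.
Proof.
move=> hr; apply/eqP; rewrite -subr_eq0; apply/eqP.
transitivity (- (8%:R^-1 * r) * (r * (2%:R * s ^+ 2 - r))); last by rewrite hr mulr0.
by field; rewrite ?pnatr_eq0.
Qed.
Lemma fin2 (F : numFieldType) (B : 'M[F]_3) (s r : F) :
  B ^+ 2 = s *: B + r%:M -> \tr (B ^+ 2) = r *+ 3 ->
  (2%:R^-1 * (s * r)) *: B = (6%:R^-1 * (r *+ 3)) *: c1 (B ^+ 2).
Proof.
move=> hB2 htr2; rewrite /c1 htr2 hB2.
apply/matrixP => i j; rewrite !mxE.
by field; rewrite ?pnatr_eq0.
Qed.

(* M_1 = { A in C^{3x3} | deg m_A <= 2 }; deg = size - 1, so size <= 3. *)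
Theorem proposition4p4 (R : realType) (A : 'M[R[i]]_3) :
  (size (mxminpoly A) <= 3)%N ->
  (forall x : 'cV[R[i]]_3, c3 A x = 0) /\
  (forall x : 'rV[R[i]]_3, c4 A x = 0) /\
  d2 A ^+ 3 = d3 A ^+ 2 /\
  d3 A *: c1 A = d2 A *: c2 A.
Proof.
move=> Hs; have [p0 [p1 [p2 [rel hc]]]] := minrel _ _ Hs.
split; first exact: c3part _ _ _ _ _ rel hc.
split; first exact: c4part _ _ _ _ _ rel hc.
have [s [r hB2]] := B2rel _ _ _ _ _ rel hc.
have h3 : (3%:R : R[i]) != 0 by rewrite pnatr_eq0.
have htr : \tr (c1 A) = 0.
  by rewrite /c1 linearB /= mxtrace_scalar -mulr_natr; field; rewrite ?pnatr_eq0.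


have [hdet hr] := dpart _ _ _ _ htr hB2.
have htr2 : \tr (c1 A ^+ 2) = r *+ 3.
  by rewrite hB2 linearD linearZ /= htr mulr0 add0r mxtrace_scalar.
rewrite /d2 /d3 /c2 hdet htr2.
set B := c1 A in hB2 *.
split; first exact: fin1 _ _ _ hr.
exact: fin2 _ _ _ _ hB2 htr2.
Qed.
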